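(* Consider the delay differential system \[ \begin{aligned} \dot T(t)&= s-dT(t)+aT(t)\Big(1-\frac{T(t)+I(t)}{T_{\max}}\Big)-\frac{bT(t)V(t)}{1+\alpha V(t)},\\ \dot I(t)&= \frac{bT(t-\tau)V(t-\tau)}{1+\alpha V(t-\tau)}+aI(t)\Big(1-\frac{T(t)+I(t)}{T_{\max}}\Big)-\mu I(t),\\ \dot V(t)&= pI(t)-cV(t), \end{aligned} \] with positive constants $s,d,a,T_{\max},b,\alpha,\mu,p,c$ satisfying $d\le\mu$, and $\tau\ge0$. Then there exist $M_I,M_V>0$ such that every positive solution $(T(t),I(t),V(t))$ satisfies $I(t)<M_I$ and $V(t)<M_V$ for all sufficiently large $t$.
   Context: A positive solution is one with $T,I,V>0$. *)

(* Defs.v *)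
From Stdlib Require Import Reals.
Open Scope R_scope.

Definition infect (b alpha Tv Vv : R) : R := b * Tv * Vv / (1 + alpha * Vv).

Definition positive_solution (s d a Tmax b alpha mu p c tau : R)
    (T I V : R -> R) : Prop :=
  (forall t, -tau <= t -> 0 < T t /\ 0 < I t /\ 0 < V t) /\
  (forall t, 0 < t ->
     derivable_pt_lim T t
       (s - d * T t + a * T t * (1 - (T t + I t) / Tmax)
          - infect b alpha (T t) (V t)) /\
     derivable_pt_lim I t
       (infect b alpha (T (t - tau)) (V (t - tau))
          + a * I t * (1 - (T t + I t) / Tmax) - mu * I t) /\
     derivable_pt_lim V t (p * I t - c * V t)).

(* Main.v *)
Require Import Defs.
From Stdlib Require Import Reals Lra Psatz.
Open Scope R_scope.

Lemma logi (a Tmax X Z : R) : 0 < a -> 0 < Tmax -> 0 < X -> 0 < Z ->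
  a * X * (1 - (X + Z) / Tmax) <= a * Tmax / 4.
Proof.
  intros Ha HT HX HZ.
  assert (E : a * X * (1 - (X + Z) / Tmax) =
     a * Tmax / 4 - a * ((X - Tmax/2) * (X - Tmax/2)) / Tmax - a * X * Z / Tmax)
    by (field; lra).
  rewrite E.
  assert (0 <= a * ((X - Tmax/2) * (X - Tmax/2)) / Tmax).
  { apply Rmult_le_pos; [|left; apply Rinv_0_lt_compat; lra].
    apply Rmult_le_pos; [lra|]. apply Rle_0_sqr. }
  assert (0 <= a * X * Z / Tmax).
  { apply Rmult_le_pos; [|left; apply Rinv_0_lt_compat; lra].
    apply Rmult_le_pos; [|lra]. apply Rmult_le_pos; lra. }
  lra.
Qed.

Lemma mul_nonpos (x e : R) : x <= 0 -> 0 <= e -> x * e <= 0.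
Proof. intros; nra. Qed.

Lemma eventual_bound (y y' : R -> R) (t1 A k : R) : 0 < k ->
  (forall t, t1 < t -> derivable_pt_lim y t (y' t)) ->
  (forall t, t1 < t -> y' t <= A - k * y t) ->
  exists t0, forall t, t0 <= t -> y t < A / k + 1.
Proof.
  intros Hk Hd Hi.
  set (t2 := t1 + 1).
  set (z := fun t => (y t - A / k) * exp (k * t)).
  set (z' := fun t => y' t * exp (k * t) + (y t - A / k) * (k * exp (k * t))).
  assert (Hz : forall t, t1 < t -> derivable_pt_lim z t (z' t)).
  { intros t Ht. unfold z, z'.
    apply (derivable_pt_lim_mult (fun t => y t - A / k) (fun t => exp (k * t))).
    - replace (y' t) with (y' t - 0) by ring.
      apply derivable_pt_lim_minus; [now apply Hd | apply derivable_pt_lim_const].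
    - replace (k * exp (k * t)) with (exp (k * t) * (k * 1)) by ring.
      apply (derivable_pt_lim_comp (fun t => k * t) exp).
      + apply derivable_pt_lim_scal. apply derivable_pt_lim_id.
      + apply derivable_pt_lim_exp. }
  assert (Hz' : forall t, t1 < t -> z' t <= 0).
  { intros t Ht. unfold z'. pose proof (Hi t Ht). pose proof (exp_pos (k * t)).
    assert (E : y' t * exp (k * t) + (y t - A / k) * (k * exp (k * t)) =
       (y' t - (A - k * y t)) * exp (k * t)) by (field; lra).
    rewrite E. apply mul_nonpos; lra. }
  set (C0 := z t2).
  exists (Rmax t2 (Rabs C0 / k)).
  intros t Ht.
  assert (Ht2 : t2 <= t) by (eapply Rle_trans; [apply Rmax_l | exact Ht]).
  assert (Htk : Rabs C0 / k <= t) by (eapply Rle_trans; [apply Rmax_r | exact Ht]).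
  assert (Hzt : z t <= C0).
  { destruct (Rle_lt_or_eq_dec _ _ Ht2) as [Hlt | Heq].
    - destruct (MVT_cor2 z z' t2 t Hlt) as [c [Hc1 Hc2]].
      + intros c Hc. apply Hz. unfold t2 in *. lra.
      + assert (z' c <= 0) by (apply Hz'; unfold t2 in *; lra).
        unfold C0. assert (z' c * (t - t2) <= 0).
        { apply mul_nonpos; lra. }
        lra.
    - subst t. unfold C0. lra. }
  assert (HkC : Rabs C0 <= k * t).
  { apply (Rmult_le_compat_l k) in Htk; [|lra].
    replace (k * (Rabs C0 / k)) with (Rabs C0) in Htk by (field; lra). exact Htk. }
  assert (Hex : k * t < exp (k * t)).
  { pose proof (exp_ineq1_le (k * t)). lra. }
  pose proof (Rle_abs C0).
  pose proof (exp_pos (k * t)).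
  unfold z in Hzt.
  assert (y t - A / k < 1).
  { apply (Rmult_lt_reg_r (exp (k * t))); lra. }
  lra.
Qed.

Theorem theorem6 (s d a Tmax b alpha mu p c tau : R) :
  0 < s -> 0 < d -> 0 < a -> 0 < Tmax -> 0 < b -> 0 < alpha ->
  0 < mu -> 0 < p -> 0 < c -> d <= mu -> 0 <= tau ->
  exists MI MV : R, 0 < MI /\ 0 < MV /\
    forall T I V : R -> R,
      positive_solution s d a Tmax b alpha mu p c tau T I V ->
      exists t0 : R, forall t, t0 <= t -> I t < MI /\ V t < MV.
Proof.
  intros Hs Hd Ha HT Hb Hal Hmu Hp Hc Hdmu Htau.
  set (A := s + a * Tmax / 2).
  assert (HA : 0 < A) by (unfold A; nra).
  assert (HAd : 0 < A / d) by (apply Rdiv_lt_0_compat; lra).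
  set (MI := A / d + 1).
  assert (HMI : 0 < MI) by (unfold MI; lra).
  assert (HpM : 0 < p * MI / c) by (apply Rdiv_lt_0_compat; nra).
  exists MI, (p * MI / c + 1). split; [exact HMI|]. split; [lra|].
  intros T I V [Hpos Hder].
  set (W := fun t => T (t - tau) + I t).
  set (F := fun t => infect b alpha (T (t - tau)) (V (t - tau))).
  set (W' := fun t =>
    (s - d * T (t - tau) + a * T (t - tau) * (1 - (T (t - tau) + I (t - tau)) / Tmax)
       - F t)
    + (F t + a * I t * (1 - (T t + I t) / Tmax) - mu * I t)).
  assert (HWd : forall t, tau < t -> derivable_pt_lim W t (W' t)).
  { intros t Ht. unfold W, W'.
    destruct (Hder (t - tau)) as [HdT _]; [lra|].
    destruct (Hder t) as [_ [HdI _]]; [lra|].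
    apply (derivable_pt_lim_plus (fun t => T (t - tau)) I); [|exact HdI].
    replace (s - d * T (t - tau) +
      a * T (t - tau) * (1 - (T (t - tau) + I (t - tau)) / Tmax) - F t)
      with ((s - d * T (t - tau) +
      a * T (t - tau) * (1 - (T (t - tau) + I (t - tau)) / Tmax) - F t) * (1 - 0))
      by ring.
    apply (derivable_pt_lim_comp (fun t => t - tau) T).
    - apply derivable_pt_lim_minus; [apply derivable_pt_lim_id | apply derivable_pt_lim_const].
    - exact HdT. }
  assert (HWi : forall t, tau < t -> W' t <= A - d * W t).
  { intros t Ht. unfold W', W, A.
    destruct (Hpos (t - tau)) as [P1 [P2 P3]]; [lra|].
    destruct (Hpos t) as [Q1 [Q2 Q3]]; [lra|].
    pose proof (logi a Tmax (T (t - tau)) (I (t - tau)) Ha HT P1 P2).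
    pose proof (logi a Tmax (I t) (T t) Ha HT Q2 Q1).
    replace (T t + I t) with (I t + T t) by ring.
    nra. }
  destruct (eventual_bound W W' tau A d Hd HWd HWi) as [t0 Ht0].
  set (t1 := Rmax t0 tau).
  assert (HI : forall t, t1 <= t -> I t < MI).
  { intros t Ht. pose proof (Rmax_l t0 tau). pose proof (Rmax_r t0 tau).
    pose proof (Ht0 t ltac:(unfold t1 in *; lra)).
    destruct (Hpos (t - tau)) as [P1 _]; [unfold t1 in *; lra|].
    unfold W in *. unfold MI. lra. }
  assert (HVd : forall t, t1 < t -> derivable_pt_lim V t ((fun t => p * I t - c * V t) t)).
  { intros t Ht. pose proof (Rmax_r t0 tau). apply (Hder t). unfold t1 in *; lra. }
  assert (HVi : forall t, t1 < t -> (fun t => p * I t - c * V t) t <= p * MI - c * V t).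
  { intros t Ht. simpl. pose proof (HI t ltac:(lra)). nra. }
  destruct (eventual_bound V _ t1 (p * MI) c Hc HVd HVi) as [t2 Ht2].
  exists (Rmax t1 t2). intros t Ht.
  pose proof (Rmax_l t1 t2). pose proof (Rmax_r t1 t2).
  split; [apply HI; lra | apply Ht2; lra].
Qed.
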